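(* Let $D$ be a chain BN on $\{0,1\}^n$ with all conditional probabilities in $(0,1)$, and let $f(x)=\prod_{i\in T_1}x_i\prod_{j\in T_0}(1-x_j)$ where $T_0,T_1\subseteq[n]$ are disjoint and $T=T_0\cup T_1$ has $d\ge1$ elements. Let $S\subseteq[n]$ and write $0=t_0<t_1<\dots<t_d$ for the elements of $T\cup\{0\}$. If $\max S>t_d$ then $\hat f_S=0$. Otherwise, with $A_i,D'_{r,a},A'_{r,a}$ defined (relative to $S,T_0,T_1$) as in the context, and with $h_i=\min(S\cap(t_{i-1},t_i))$ if $S\cap(t_{i-1},t_i)\neq\emptyset$ and $h_i=t_i$ otherwise ($i=1,\dots,d$), $y_0=0$ and $y_i=1$ if $t_i\in T_1$, $y_i=0$ if $t_i\in T_0$, $$\hat f_S=\prod_{i=1}^d D'_{h_i+1,\,t_i}\;A'_{t_{i-1}+1,\,h_i}(y_{i-1}).$$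
   Context: A chain BN on $X_1,\dots,X_n$ is a Bayesian network with $\operatorname{pa}(1)=\emptyset$ and $\operatorname{pa}(i)=\{i-1\}$ for $2\le i\le n$. For $b\in\{0,1\}$ write $\mu_{i,b}=P(X_i=1\mid X_{i-1}=b)$ and $\sigma_{i,b}=\sqrt{\mu_{i,b}(1-\mu_{i,b})}$ for $i\ge2$, and set $\mu_{1,0}=\mu_{1,1}=P(X_1=1)$, $\sigma_{1,0}=\sigma_{1,1}=\sqrt{\mu_{1,0}(1-\mu_{1,0})}$. The BN-induced basis is $\phi_i(x)=(x_i-\mu_{i,x_{i-1}})/\sigma_{i,x_{i-1}}$ (for $i=1$, $(x_1-\mu_{1,0})/\sigma_{1,0}$), $\phi_S=\prod_{i\in S}\phi_i$, and $\hat f_S=\mathbb{E}_D[f(X)\phi_S(X)]$. Given $S,T_0,T_1$ with $T=T_0\cup T_1$, for $i\in[n]$ and $b\in\{0,1\}$ define $A_i(b)=\mu_{i,b}$ if $i\in T_1\setminus S$ or $i\notin S\cup T$; $A_i(b)=1-\mu_{i,b}$ if $i\in T_0\setminus S$; $A_i(b)=\sigma_{i,b}$ if $i\in S\cap T_1$ or $i\in S\setminus T$; $A_i(b)=-\sigma_{i,b}$ if $i\in S\cap T_0$. Let $D_i=A_i(1)-A_i(0)$. For integers $r,a$ let $D'_{r,a}=\prod_{\ell=r}^{a}D_\ell$ (equal to $1$ if $r>a$), $A'_{r,a}(0)=\sum_{\ell=r}^{a}D'_{\ell+1,a}A_\ell(0)$ (equal to $0$ if $r>a$), and $A'_{r,a}(1)=A'_{r,a}(0)+D'_{r,a}$.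 *)

(* Defs.v *)
From HB Require Import structures.
From mathcomp Require Import all_boot all_order all_algebra.
From mathcomp Require Import reals.
Set Implicit Arguments. Unset Strict Implicit. Unset Printing Implicit Defensive.
Import Order.TTheory GRing.Theory Num.Theory.
Local Open Scope ring_scope.

(* Variables are indexed 1..n.  A point x of {0,1}^n is an n.-tuple bool;
   x_i (1 <= i <= n) is [xv x i]; by convention x_0 = false (only used as
   the "parent" of X_1, whose conditional probability does not depend on it). *)
Definition xv (n : nat) (x : n.-tuple bool) (i : nat) : bool :=
  if i is k.+1 then nth false x k else false.

Section ChainBN.
Variable R : realType.
Variable n : nat.
(* mu i b = P(X_i = 1 | X_{i-1} = b) for i >= 2; mu 1 b = P(X_1 = 1). *)
Variable mu : nat -> bool -> R.

Definition sigma (i : nat) (b : bool) : R := Num.sqrt (mu i b * (1 - mu i b)).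

Definition chainD (x : n.-tuple bool) : R :=
  \prod_(1 <= i < n.+1)
     (if xv x i then mu i (xv x i.-1) else 1 - mu i (xv x i.-1)).

Definition phi (i : nat) (x : n.-tuple bool) : R :=
  (((xv x i)%:R - mu i (xv x i.-1)) / sigma i (xv x i.-1)).

Definition phiS (S : pred nat) (x : n.-tuple bool) : R :=
  \prod_(1 <= i < n.+1 | S i) phi i x.

Definition fourier (f : n.-tuple bool -> R) (S : pred nat) : R :=
  \sum_(x : n.-tuple bool) chainD x * (f x * phiS S x).

Definition conjf (T0 T1 : pred nat) (x : n.-tuple bool) : R :=
  (\prod_(1 <= i < n.+1 | T1 i) (xv x i)%:R) *
  (\prod_(1 <= j < n.+1 | T0 j) (1 - (xv x j)%:R)).

Variables S T0 T1 : pred nat.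

Definition Acoef (i : nat) (b : bool) : R :=
  if S i then (if T0 i then - sigma i b else sigma i b)
  else (if T0 i then 1 - mu i b else mu i b).

Definition Dcoef (i : nat) : R := Acoef i true - Acoef i false.

Definition Dp (r a : nat) : R := \prod_(r <= l < a.+1) Dcoef l.

Definition Ap (r a : nat) (b : bool) : R :=
  let a0 := \sum_(r <= l < a.+1) Dp l.+1 a * Acoef l false in
  if b then a0 + Dp r a else a0.

End ChainBN.

Definition Tlist (n : nat) (T0 T1 : pred nat) : seq nat :=
  [seq k <- iota 1 n | T0 k || T1 k].

Definition tpt (n : nat) (T0 T1 : pred nat) (i : nat) : nat :=
  nth 0 (0 :: Tlist n T0 T1) i.

Definition hpt (n : nat) (S T0 T1 : pred nat) (i : nat) : nat :=
  let lo := tpt n T0 T1 i.-1 in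
  let hi := tpt n T0 T1 i in
  head hi [seq k <- iota lo.+1 (hi - lo.+1) | S k].

Definition ypt (n : nat) (T0 T1 : pred nat) (i : nat) : bool :=
  if i is 0 then false else T1 (tpt n T0 T1 i).

(* Main.v *)
Require Import Defs.
From HB Require Import structures.
From mathcomp Require Import all_boot all_order all_algebra.
From mathcomp Require Import reals.
From mathcomp Require Import ring lra zify.
Set Implicit Arguments. Unset Strict Implicit. Unset Printing Implicit Defensive.
Import Order.TTheory GRing.Theory Num.Theory.
Local Open Scope ring_scope.
Lemma sum_tupleS (R : realType) k (F : k.+1.-tuple bool -> R) :
  \sum_(x : k.+1.-tuple bool) F x =
  \sum_(c : bool) \sum_(x : k.-tuple bool) F [tuple of c :: x].
Proof.
rewrite pair_big /=.
rewrite (reindex (fun p : bool * k.-tuple bool => [tuple of p.1 :: p.2])) //=.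
exists (fun t : k.+1.-tuple bool => (thead t, [tuple of behead t])).
  by case=> c x _ /=; congr pair; apply: val_inj.
by move=> t _; rewrite [in RHS](tuple_eta t).
Qed.

Section W.
Variable R : realType.
Variable g : nat -> bool -> bool -> R.

Fixpoint Wf (m k : nat) (b : bool) : R :=
  if k is k'.+1 then \sum_(c : bool) g m b c * Wf m.+1 k' c else 1.

Lemma tuple_sumW k : forall m b,
  \sum_(x : k.-tuple bool) \prod_(i < k) g (m + i) (nth false (b :: x) i) (nth false x i)
  = Wf m k b.
Proof.
elim: k => [|k IH] m b /=.
  by under eq_bigr do rewrite big_ord0; rewrite sumr_const card_tuple expn0.
rewrite sum_tupleS; apply: eq_bigr => c _.
rewrite -(IH m.+1 c) mulr_sumr; apply: eq_bigr => x _.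
rewrite big_ord_recl /= addn0; congr (_ * _).
by apply: eq_bigr => i _; rewrite /bump /= add1n addSnnS.
Qed.
End W.
Section Main.
Variable R : realType.
Variable n : nat.
Variable mu : nat -> bool -> R.
Variables S T0 T1 : pred nat.

Definition g i b (c : bool) : R := (if c then mu i b else 1 - mu i b) *
  (((if T1 i then c%:R else 1) * (if T0 i then 1 - c%:R else 1)) *
   (if S i then (c%:R - mu i b) / sigma mu i b else 1)).

Lemma fourier_W : fourier mu (@conjf R n T0 T1) S = Wf g 1 n false.
Proof.
rewrite /fourier -tuple_sumW; apply: eq_bigr => x _.
transitivity (\prod_(1 <= i < n.+1) g i (xv x i.-1) (xv x i)).
  rewrite /g !big_split /= /chainD /conjf /phiS.
  rewrite (big_mkcond T1) (big_mkcond T0) (big_mkcond S) /=.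
  by [].
rewrite big_add1 /= big_mkord; apply: eq_bigr => i _.
by rewrite add1n; case: (nat_of_ord i).
Qed.

Hypothesis Hmu : forall i b, (1 <= i <= n)%N -> 0 < mu i b < 1.
Hypothesis HT01 : forall k, ~~ (T0 k && T1 k).

Definition w j b := Wf g j (n.+1 - j) b.

Lemma w_end b : w n.+1 b = 1.
Proof. by rewrite /w subnn. Qed.

Lemma w_rec j b : (j <= n)%N -> w j b = \sum_(c : bool) g j b c * w j.+1 c.
Proof. by move=> hj; rewrite /w subSn //= subSS. Qed.

Lemma sig_rel j b : (1 <= j <= n)%N ->
  sigma mu j b = mu j b * (1 - mu j b) * (sigma mu j b)^-1.
Proof.
move=> hj; have /andP[h0 h1] := Hmu b hj.
have hp : 0 < mu j b * (1 - mu j b) by rewrite mulr_gt0 // subr_gt0.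
have hs : sigma mu j b != 0 by rewrite gt_eqF // /sigma sqrtr_gt0.
rewrite -[in mu j b * _](sqr_sqrtr (ltW hp)) -/(sigma mu j b) expr2 mulfK //.
Qed.

Notation A := (Acoef mu S T0).
Notation Dc := (Dcoef mu S T0).

Lemma gstep j b (v : bool -> R) : (1 <= j <= n)%N ->
  \sum_(c : bool) g j b c * v c =
  if T1 j then A j b * v true
  else if T0 j then A j b * v false
  else if S j then A j b * (v true - v false)
  else v false + A j b * (v true - v false).
Proof.
move=> hj; rewrite big_bool /g /Acoef /=.
have := sig_rel b hj; move: (sigma mu j b) (mu j b) => s m.
have := HT01 j.
case: (T1 j); case: (T0 j); case: (S j) => //= _;
  move: (s^-1) => u sE; rewrite ?sE; ring.
Qed.

Lemma down_ind (P : nat -> Prop) a b : P b ->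
  (forall j, (a <= j < b)%N -> P j.+1 -> P j) -> forall j, (a <= j <= b)%N -> P j.
Proof.
move=> Pb IH j /andP[ha hb].
have [k ek] : exists k, k = (b - j)%N by eexists.
elim: k j ek ha hb => [|k IHk] j ek ha hb.
  by have -> : j = b by lia.
apply: IH; first lia.
apply: IHk; lia.
Qed.

Lemma stepT j b : (1 <= j <= n)%N -> T0 j || T1 j ->
  w j b = A j b * w j.+1 (T1 j).
Proof.
move=> hj hT; rewrite w_rec; last by case/andP: hj.
rewrite gstep //.
move: hT (HT01 j); by case: (T1 j); case: (T0 j).
Qed.

Lemma stepN j b : (1 <= j <= n)%N -> ~~ (T0 j || T1 j) -> ~~ S j ->
  w j b = w j.+1 false + A j b * (w j.+1 true - w j.+1 false).
Proof.
move=> hj hT hS; rewrite w_rec; last by case/andP: hj.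
rewrite gstep //.
by move: hT hS; case: (T1 j); case: (T0 j); case: (S j).
Qed.

Lemma stepS j b : (1 <= j <= n)%N -> ~~ (T0 j || T1 j) -> S j ->
  w j b = A j b * (w j.+1 true - w j.+1 false).
Proof.
move=> hj hT hS; rewrite w_rec; last by case/andP: hj.
rewrite gstep //.
by move: hT hS; case: (T1 j); case: (T0 j); case: (S j).
Qed.

Lemma diffT j : (1 <= j <= n)%N -> T0 j || T1 j ->
  w j true - w j false = Dc j * w j.+1 (T1 j).
Proof. by move=> hj hT; rewrite (@stepT j true) // (@stepT j false) // /Dcoef; ring. Qed.

Lemma diffN j : (1 <= j <= n)%N -> ~~ (T0 j || T1 j) ->
  w j true - w j false = Dc j * (w j.+1 true - w j.+1 false).
Proof.
move=> hj hT; case hS: (S j).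
  by rewrite (@stepS j true) // (@stepS j false) // /Dcoef; ring.
by rewrite (@stepN j true) ?hS // (@stepN j false) ?hS // /Dcoef; ring.
Qed.

Lemma Dp_rec j h : (j <= h)%N -> Dp mu S T0 j h = Dc j * Dp mu S T0 j.+1 h.
Proof. by move=> hj; rewrite /Dp big_ltn. Qed.

Lemma Dp_nil h : Dp mu S T0 h.+1 h = 1.
Proof. by rewrite /Dp big_geq. Qed.

Lemma Ap_rec j h b : (j <= h)%N ->
  Ap mu S T0 j h b = Ap mu S T0 j.+1 h false + Dp mu S T0 j.+1 h * A j b.
Proof.
move=> hj; rewrite /Ap big_ltn // (@Dp_rec j h hj).
case: b => //=; rewrite /Dcoef; ring.
Qed.

Lemma Ap_nil h : Ap mu S T0 h.+1 h false = 0.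
Proof. by rewrite /Ap big_geq. Qed.

Lemma Ap_diff j h : Ap mu S T0 j h true - Ap mu S T0 j h false = Dp mu S T0 j h.
Proof. by rewrite /Ap /=; ring. Qed.

Lemma seg lo h hi : (lo < h <= hi)%N -> (hi <= n)%N -> T0 hi || T1 hi ->
  (forall k, (lo < k < hi)%N -> ~~ (T0 k || T1 k)) ->
  (forall k, (lo < k < h)%N -> ~~ S k) -> ((h < hi)%N -> S h) ->
  forall b, w lo.+1 b = Dp mu S T0 h.+1 hi * Ap mu S T0 lo.+1 h b * w hi.+1 (T1 hi).
Proof.
move=> /andP[hlo hhi] hn hT hnT hnS hSh.
set Z := w hi.+1 (T1 hi).
have diff : forall j, (h.+1 <= j <= hi)%N -> w j true - w j false = Dp mu S T0 j hi * Z.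
  apply: (down_ind (a:=h.+1)).
    rewrite diffT //; last lia.
    by rewrite (@Dp_rec hi hi (leqnn hi)) Dp_nil mulr1.
  move=> j hj IH.
  rewrite diffN; [|lia|apply: hnT; lia].
  by rewrite IH (@Dp_rec j hi) ?mulrA //; lia.
have wh : forall b, w h b = A h b * (Dp mu S T0 h.+1 hi * Z).
  move=> b; have [ehh|lthh] := eqVneq h hi.
    by rewrite ehh Dp_nil mul1r stepT //; lia.
  have lt : (h < hi)%N by rewrite ltn_neqAle lthh.
  rewrite stepS ?hSh //; [|lia|apply: hnT; lia].
  by rewrite diff //; lia.
have main : forall j, (lo.+1 <= j <= h)%N -> forall b,
    w j b = Dp mu S T0 h.+1 hi * Z * Ap mu S T0 j h b.
  apply: (down_ind (a:=lo.+1)).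
    move=> b; rewrite wh Ap_rec // Ap_nil Dp_nil add0r mul1r; ring.
  move=> j hj IH b.
  rewrite stepN; [|lia|apply: hnT; lia|apply: hnS; lia].
  rewrite !IH (@Ap_rec j h b) ?mulrA; last lia.
  rewrite -mulrBr Ap_diff; ring.
move=> b; rewrite main; last lia.
rewrite /Z; ring.
Qed.

Hypothesis HS : forall k, S k -> (1 <= k <= n)%N.
Hypothesis HT0 : forall k, T0 k -> (1 <= k <= n)%N.
Hypothesis HT1 : forall k, T1 k -> (1 <= k <= n)%N.

Section Tail.
Variable td : nat.
Hypothesis Htd : (td <= n)%N.
Hypothesis HnoT : forall k, (td < k <= n)%N -> ~~ (T0 k || T1 k).

Lemma tail_const j : (td < j <= n.+1)%N -> w j true = w j false.
Proof.
move: j; apply: (down_ind (a:=td.+1)); first by rewrite !w_end.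
move=> j hj IH.
have hj' : (1 <= j <= n)%N by lia.
have hT : ~~ (T0 j || T1 j) by apply: HnoT; lia.
case hSj: (S j).
  by rewrite (@stepS j true) // (@stepS j false) // IH subrr !mulr0.
by rewrite (@stepN j true) ?hSj // (@stepN j false) ?hSj // IH subrr !mulr0.
Qed.

Lemma tail_one j : (td < j <= n.+1)%N -> (forall s, S s -> (s < j)%N) ->
  forall b, w j b = 1.
Proof.
move: j; apply: (down_ind (a:=td.+1)); first by move=> _ b; rewrite w_end.
move=> j hj IH hSl b.
have hj' : (1 <= j <= n)%N by lia.
have hT : ~~ (T0 j || T1 j) by apply: HnoT; lia.
have hSj : ~~ S j by apply/negP => /hSl; rewrite ltnn.
rewrite stepN // tail_const; last lia.
rewrite subrr mulr0 addr0 IH // => s /hSl; lia.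
Qed.

Lemma tail_zero s : S s -> (td < s)%N -> w 1 false = 0.
Proof.
move=> hS hs.
have hs1 := HS hS.
have : forall j, (1 <= j <= s)%N -> forall b, w j b = 0.
  apply: (down_ind (a:=1)).
    move=> b; rewrite stepS //; last by apply: HnoT; lia.
    by rewrite tail_const ?subrr ?mulr0 //; lia.
  move=> j hj IH b; rewrite w_rec; last lia.
  by rewrite big1 // => c _; rewrite IH mulr0.
by move=> /(_ 1%N); apply; lia.
Qed.
End Tail.

Definition L := Tlist n T0 T1.
Definition t := tpt n T0 T1.

Lemma memL k : (k \in L) = ((1 <= k <= n)%N && (T0 k || T1 k)).
Proof. by rewrite /L /Tlist mem_filter mem_iota add1n andbC. Qed.

Lemma sortedL : sorted ltn (0%N :: L).
Proof.
rewrite /= path_sortedE; last exact: ltn_trans.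
apply/andP; split.
  by apply/allP => k; rewrite memL => /andP[/andP[]].
exact/sorted_filter/iota_ltn_sorted/ltn_trans.
Qed.

Lemma t_lt a b : (a < b <= size L)%N -> (t a < t b)%N.
Proof.
move=> /andP[hab hb]; apply: (sorted_ltn_nth ltn_trans 0%N sortedL) => //=;
  rewrite inE /=; lia.
Qed.

Lemma t_le a b : (a <= b <= size L)%N -> (t a <= t b)%N.
Proof.
move=> /andP[hab hb]; case: (ltngtP a b) hab => // [hab _|-> _].
  by apply: ltnW; apply: t_lt; lia.
by [].
Qed.

Lemma t_in i : (1 <= i <= size L)%N -> t i \in L.
Proof. by case: i => // i /= hi; apply: mem_nth. Qed.

Lemma t_index k : k \in L -> exists m, (1 <= m <= size L)%N /\ t m = k.
Proof.
move=> hk; exists (index k L).+1; split; last by rewrite /t /tpt /= nth_index.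
by rewrite /= index_mem.
Qed.

Lemma inT k : T0 k || T1 k -> k \in L.
Proof.
move=> hk; rewrite memL hk andbT.
by case/orP: hk => [/HT0|/HT1].
Qed.

Lemma noT_between i k : (1 <= i <= size L)%N -> (t i.-1 < k < t i)%N ->
  ~~ (T0 k || T1 k).
Proof.
move=> hi hk; apply/negP => /inT /t_index [m [hm em]].
case: (ltnP m i) => hmi.
  have := @t_le m i.-1; rewrite em; lia.
have := @t_le i m; rewrite em; lia.
Qed.

Lemma noT_after k : (t (size L) < k <= n)%N -> ~~ (T0 k || T1 k).
Proof.
move=> hk; apply/negP => /inT /t_index [m [hm em]].
have := @t_le m (size L); rewrite em; lia.
Qed.

Lemma head_filter_iota (P : pred nat) m k x :
  (head x [seq j <- iota m k | P j] = x /\ forall j, (m <= j < m + k)%N -> ~~ P j) \/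
  ((m <= head x [seq j <- iota m k | P j] < m + k)%N /\ P (head x [seq j <- iota m k | P j]) /\
   forall j, (m <= j < head x [seq j <- iota m k | P j])%N -> ~~ P j).
Proof.
elim: k m => [|k IH] m /=.
  by left; split => // j hj; exfalso; lia.
case hm: (P m) => /=.
  right; split; first lia.
  by split => // j hj; exfalso; lia.
have [[e H]|[H1 [H2 H3]]] := IH m.+1.
  left; split => // j hj; have [->|ne] := eqVneq j m; first by rewrite hm.
  by apply: H; lia.
right; split; first lia.
split => // j hj; have [->|ne] := eqVneq j m; first by rewrite hm.
by apply: H3; lia.
Qed.

Lemma h_spec i : (1 <= i <= size L)%N ->
  let lo := t i.-1 in let hi := t i in let hh := hpt n S T0 T1 i in
  [/\ (lo < hh <= hi)%N, (forall k, (lo < k < hh)%N -> ~~ S k) & ((hh < hi)%N -> S hh)].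
Proof.
move=> hi lo hi' hh.
have ltlh : (lo < hi')%N by apply: t_lt; lia.
have E : (lo.+1 + (hi' - lo.+1) = hi')%N by lia.
have := head_filter_iota S lo.+1 (hi' - lo.+1) hi'; rewrite E.
rewrite /hh /hpt -/(t i.-1) -/(t i) -/lo -/hi'.
case=> [[e H]|[H1 [H2 H3]]].
  rewrite e; split => //; first lia.
  by rewrite ltnn.
by split => //; try lia.

Qed.

Lemma main_part : (1 <= size L)%N ->
  let d := size L in let h := hpt n S T0 T1 in let y := ypt n T0 T1 in
  let fhat := fourier mu (@conjf R n T0 T1) S in
  ((exists s, S s /\ (tpt n T0 T1 d < s)%N) -> fhat = 0) /\
  (~ (exists s, S s /\ (tpt n T0 T1 d < s)%N) ->
     fhat = \prod_(1 <= i < d.+1)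
              (Dp mu S T0 (h i).+1 (tpt n T0 T1 i) *
               Ap mu S T0 (tpt n T0 T1 i.-1).+1 (h i) (y i.-1))).
Proof.
move=> hd d h y fhat.
have fE : fhat = w 1 false by rewrite /fhat fourier_W /w subSS subn0.
have tdn : (t d <= n)%N.
  have hin : t d \in L by apply: t_in; lia.
  by rewrite memL in hin; case/andP: hin => /andP[].
have HnoT : forall k, (t d < k <= n)%N -> ~~ (T0 k || T1 k) by exact: noT_after.
split.
  by case=> s [hs hs']; rewrite fE (tail_zero tdn HnoT hs hs').
move=> nS; rewrite fE.
have IHk : forall k, (k <= d)%N -> w 1 false =
    (\prod_(1 <= i < k.+1) (Dp mu S T0 (h i).+1 (t i) * Ap mu S T0 (t i.-1).+1 (h i) (y i.-1)))
    * w (t k).+1 (y k).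
  elim=> [|k IH] hk; first by rewrite big_geq // mul1r.
  have hk' : (k.+1 <= size L)%N by [].
  rewrite big_nat_recr //= IH; last lia.
  have [hlt hnS hSh] := @h_spec k.+1 ltac:(lia).
  have hin := @t_in k.+1 ltac:(lia).
  move: (hin); rewrite memL => /andP[/andP[_ hn] hT].
  rewrite (@seg (t k) (h k.+1) (t k.+1)) //; last first.
  - by move=> kk hkk; apply: (@noT_between k.+1) => //=; lia.
  rewrite /y /ypt -/(t k.+1) /=; ring.
rewrite (IHk d) // (@tail_one _ tdn HnoT (t d).+1) ?mulr1 //; first lia.
move=> s hs; rewrite ltnS leqNgt; apply/negP => hlt; apply: nS; by exists s.
Qed.
End Main.

Theorem mainTheorem5 (R : realType) (n : nat) (mu : nat -> bool -> R)
    (S T0 T1 : pred nat) :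
  (forall i b, (1 <= i <= n)%N -> 0 < mu i b < 1) ->
  mu 1%N false = mu 1%N true ->
  (forall k, S k -> (1 <= k <= n)%N) ->
  (forall k, T0 k -> (1 <= k <= n)%N) ->
  (forall k, T1 k -> (1 <= k <= n)%N) ->
  (forall k, ~~ (T0 k && T1 k)) ->
  (1 <= size (Tlist n T0 T1))%N ->
  let d := size (Tlist n T0 T1) in
  let t := tpt n T0 T1 in
  let h := hpt n S T0 T1 in
  let y := ypt n T0 T1 in
  let fhat := fourier mu (@conjf R n T0 T1) S in
  ((exists s, S s /\ (t d < s)%N) -> fhat = 0) /\
  (~ (exists s, S s /\ (t d < s)%N) ->
     fhat = \prod_(1 <= i < d.+1)
              (Dp mu S T0 (h i).+1 (t i) * Ap mu S T0 (t i.-1).+1 (h i) (y i.-1))).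
Proof.
move=> Hmu _ HS HT0 HT1 HT01 Hd.
exact: (main_part Hmu HT01 HS HT0 HT1 Hd).
Qed.
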